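(* Let $p>0$, $m>0$, and let $N$ be a random variable on $\mathbb{N}_0$ with the arcsine probability mass function \[ f(n)=\mathbb{P}(N=n)=\nu(n)\,e^{n\theta(m)-\kappa(m)},\qquad \theta(m)=-\tfrac12\log\Big(1+\frac{p^2}{m^2}\Big),\quad \kappa(m)=p\arctan(m/p), \] where \[ \nu(2n)=\frac{1}{(2n)!}\prod_{i=0}^{n-1}\big((2i)^2+p^2\big),\qquad \nu(2n+1)=\frac{p}{(2n+1)!}\prod_{i=0}^{n-1}\big((2i+1)^2+p^2\big),\quad n\in\mathbb{N}_0 \] (empty products equal $1$). Let $b(n)=\frac{1}{\sqrt{n+1}}\big(\sqrt{1+\tfrac1n}-1\big)$ for $n\ge 1$, and define the probability mass function $b_2$ on $\{2,3,\dots\}$ by $b_2(2n)=b_2(2n+1)=\tfrac12 b(n)$ for $n\ge1$. Then there is a constant $C$ (not depending on $n$) such that \[ f(n\mid n\ge 2):=\mathbb{P}(N=n\mid N\ge 2)\le C\,b_2(n)\qquad\text{for all } n=2,3,\ldots. \]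
   Context: $b$ is the probability mass function of $\lfloor U^{-2}\rfloor$ for $U$ uniform on $(0,1)$, and $b_2$ is the law of $2Y$ or $2Y+1$ (each with probability $1/2$) with $Y\sim b$. The constant $C$ may depend on $p$ and $m$. *)

(* Defs.v *)
From Stdlib Require Import Reals Lra Arith.
Open Scope R_scope.

Fixpoint prodR (n : nat) (g : nat -> R) : R :=
  match n with
  | O => 1
  | S k => prodR k g * g k
  end.

Definition nu (p : R) (k : nat) : R :=
  if Nat.even k then
    / INR (fact k) * prodR (Nat.div2 k) (fun i => (2 * INR i) ^ 2 + p ^ 2)
  else
    p / INR (fact k) * prodR (Nat.div2 k) (fun i => (2 * INR i + 1) ^ 2 + p ^ 2).

Definition theta (p m : R) : R := - / 2 * ln (1 + p ^ 2 / m ^ 2).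
Definition kappa (p m : R) : R := p * atan (m / p).

Definition f_arcsine (p m : R) (n : nat) : R :=
  nu p n * exp (INR n * theta p m - kappa p m).

(* P(N = n | N >= 2) = f(n) / P(N >= 2), with P(N>=2) = 1 - f(0) - f(1) since f is a pmf *)
Definition f_cond2 (p m : R) (n : nat) : R :=
  f_arcsine p m n / (1 - f_arcsine p m 0 - f_arcsine p m 1).

Definition b (n : nat) : R := / sqrt (INR n + 1) * (sqrt (1 + / INR n) - 1).

(* b2(2n) = b2(2n+1) = b(n)/2 for n >= 1 (used for arguments >= 2) *)
Definition b2 (k : nat) : R := / 2 * b (Nat.div2 k).

(* Main.v *)
Require Import Defs.
From Stdlib Require Import Reals.
From Stdlib Require Import Lra Lia Arith ZArith.
Open Scope R_scope.

Lemma prodR_nonneg (n : nat) (g : nat -> R) :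
  (forall i, 0 <= g i) -> 0 <= prodR n g.
Proof.
  intros H; induction n as [|n IH]; simpl; [lra|].
  apply Rmult_le_pos; auto.
Qed.

Lemma nu_nonneg p n : 0 < p -> 0 <= nu p n.
Proof.
  intros hp; unfold nu.
  assert (Hf : 0 < INR (fact n)) by (apply lt_0_INR; apply lt_O_fact).
  destruct (Nat.even n).
  - apply Rmult_le_pos.
    + left; apply Rinv_0_lt_compat; lra.
    + apply prodR_nonneg; intros i; apply Rplus_le_le_0_compat; apply pow2_ge_0.
  - apply Rmult_le_pos.
    + unfold Rdiv; apply Rmult_le_pos; [lra|left; apply Rinv_0_lt_compat; lra].
    + apply prodR_nonneg; intros i; apply Rplus_le_le_0_compat; apply pow2_ge_0.
Qed.

Lemma INR_div2 n : INR n = 2 * INR (Nat.div2 n) + (if Nat.even n then 0 else 1).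
Proof.
  rewrite (Nat.div2_odd n) at 1.
  rewrite <- Nat.negb_even.
  rewrite plus_INR, mult_INR.
  destruct (Nat.even n); simpl Nat.b2n; simpl negb; simpl INR; lra.
Qed.

Lemma nu_step p n :
  nu p (S (S n)) = nu p n * (INR n ^ 2 + p ^ 2) / (INR (S n) * INR (S (S n))).
Proof.
  unfold nu.
  change (Nat.even (S (S n))) with (Nat.even n).
  change (Nat.div2 (S (S n))) with (S (Nat.div2 n)).
  rewrite (fact_simpl (S n)), (fact_simpl n).
  pose proof (INR_div2 n) as Hd.
  assert (Hf : 0 < INR (fact n)) by (apply lt_0_INR; apply lt_O_fact).
  assert (H1 : 0 < INR (S n)) by (apply lt_0_INR; lia).
  assert (H2 : 0 < INR (S (S n))) by (apply lt_0_INR; lia).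
  rewrite !mult_INR.
  destruct (Nat.even n); simpl prodR; rewrite <- ?Hd;
  [replace (2 * INR (Nat.div2 n)) with (INR n) by lra
  |replace (2 * INR (Nat.div2 n) + 1) with (INR n) by lra];
  field; repeat split; lra.
Qed.

Lemma f_step p m n : 0 < m ->
  f_arcsine p m (S (S n)) =
  f_arcsine p m n * ((INR n ^ 2 + p ^ 2) / (INR (S n) * INR (S (S n))))
    * (m ^ 2 / (m ^ 2 + p ^ 2)).
Proof.
  intros hm. unfold f_arcsine. rewrite nu_step.
  replace (INR (S (S n)) * theta p m - kappa p m)
    with ((INR n * theta p m - kappa p m) + 2 * theta p m)
    by (rewrite !S_INR; ring).
  rewrite exp_plus.
  assert (He : exp (2 * theta p m) = m ^ 2 / (m ^ 2 + p ^ 2)).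
  { unfold theta. replace (2 * (- / 2 * ln (1 + p ^ 2 / m ^ 2)))
      with (- ln (1 + p ^ 2 / m ^ 2)) by field.
    assert (0 < m ^ 2) by (apply pow_lt; lra).
    assert (0 <= p ^ 2) by apply pow2_ge_0.
    assert (0 < 1 + p ^ 2 / m ^ 2).
    { assert (0 <= p ^ 2 / m ^ 2) by (unfold Rdiv; apply Rmult_le_pos; [lra|left; apply Rinv_0_lt_compat; lra]). lra. }
    rewrite exp_Ropp, exp_ln by lra. field. lra. }
  rewrite He. unfold Rdiv. ring.
Qed.

Fixpoint Mx (a : nat -> R) (k : nat) : R :=
  match k with O => a O | S k' => Rmax (Mx a k') (a (S k')) end.

Lemma Mx_ge a k n : (n <= k)%nat -> a n <= Mx a k.
Proof.
  induction k as [|k IH]; intros H.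
  - assert (n = 0%nat) by lia; subst; simpl; lra.
  - simpl. destruct (Nat.eq_dec n (S k)) as [->|Hn].
    + apply Rmax_r.
    + eapply Rle_trans; [apply IH; lia|apply Rmax_l].
Qed.

Lemma bounded_of_step (a : nat -> R) (N : nat) :
  (forall n, (N <= n)%nat -> a (S (S n)) <= a n) ->
  forall n, a n <= Mx a (S N).
Proof.
  intros H n. induction n as [n IH] using lt_wf_ind.
  destruct (le_lt_dec n (S N)) as [Hle|Hlt].
  - apply Mx_ge; exact Hle.
  - destruct n as [|[|n']]; try lia.
    eapply Rle_trans; [apply H; lia|apply IH; lia].
Qed.

Lemma b_lower k : (1 <= k)%nat -> / (5 * INR k ^ 2) <= b k.
Proof.
  intros Hk. unfold b.
  assert (Hx : 1 <= INR k) by (apply (le_INR 1); exact Hk).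
  set (x := INR k) in *.
  set (y := sqrt (1 + / x)).
  assert (Hi : 0 < / x <= 1).
  { split; [apply Rinv_0_lt_compat; lra|].
    rewrite <- Rinv_1; apply Rinv_le_contravar; lra. }
  assert (Hy2 : y * y = 1 + / x) by (apply sqrt_sqrt; lra).
  assert (Hy0 : 0 <= y) by apply sqrt_pos.
  assert (Hy1 : 1 <= y) by nra.
  assert (Hy3 : y <= 3/2) by nra.
  assert (Hx1 : x * (y - 1) * (y + 1) = 1).
  { replace (x * (y - 1) * (y + 1)) with (x * (y * y - 1)) by ring.
    rewrite Hy2. field. lra. }
  set (z := sqrt (x + 1)).
  assert (Hz2 : z * z = x + 1) by (apply sqrt_sqrt; lra).
  assert (Hz0 : 0 <= z) by apply sqrt_pos.
  assert (Hz : z <= 2 * x) by nra.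
  assert (Hzp : 0 < z) by nra.
  assert (Hym : 2 / (5 * x) <= y - 1).
  { apply (Rmult_le_reg_l (5 * x)); [lra|].
    replace (5 * x * (2 / (5 * x))) with 2 by (field; lra). nra. }
  assert (Hiz : / (2 * x) <= / z) by (apply Rinv_le_contravar; lra).
  replace (/ (5 * x ^ 2)) with (/ (2 * x) * (2 / (5 * x))) by (field; lra).
  apply Rmult_le_compat; try lra.
  - left; apply Rinv_0_lt_compat; lra.
  - unfold Rdiv; apply Rmult_le_pos; [lra|left; apply Rinv_0_lt_compat; lra].
Qed.

Lemma poly_ineq x p m : 0 < p -> 0 < m -> 2 <= x -> 2 * m ^ 2 <= x * p ^ 2 -> 2 * m <= x ->
  (x + 2) * (x ^ 2 + p ^ 2) * m ^ 2 <= x ^ 2 * (x + 1) * (m ^ 2 + p ^ 2).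
Proof.
  intros hp hm hx h1 h2.
  assert (A : x ^ 2 * m ^ 2 <= x ^ 2 * (x * p ^ 2) / 2).
  { assert (0 <= x ^ 2) by apply pow2_ge_0. nra. }
  assert (B0 : m ^ 2 <= x ^ 2 / 4) by nra.
  assert (B : x * p ^ 2 * m ^ 2 + 2 * p ^ 2 * m ^ 2 <= 2 * x * p ^ 2 * (x ^ 2 / 4)).
  { assert (0 <= p ^ 2 * m ^ 2) by (apply Rmult_le_pos; apply pow2_ge_0).
    assert (0 <= p ^ 2) by apply pow2_ge_0.
    assert (2 * p ^ 2 * m ^ 2 <= x * p ^ 2 * m ^ 2) by nra.
    assert (2 * x * p ^ 2 * m ^ 2 <= 2 * x * p ^ 2 * (x ^ 2 / 4)).
    { apply Rmult_le_compat_l; [nra|lra]. }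
    nra. }
  assert (0 <= x ^ 2 * p ^ 2) by (apply Rmult_le_pos; apply pow2_ge_0).
  nra.
Qed.

Lemma f_nonneg p m n : 0 < p -> 0 <= f_arcsine p m n.
Proof.
  intros hp; unfold f_arcsine. apply Rmult_le_pos; [apply nu_nonneg; lra|].
  left; apply exp_pos.
Qed.

Lemma b2_nonneg n : (2 <= n)%nat -> / (10 * INR n ^ 2) <= b2 n.
Proof.
  intros Hn. unfold b2.
  assert (Hk : (1 <= Nat.div2 n)%nat).
  { pose proof (Nat.div2_odd n). destruct (Nat.odd n); simpl in H; lia. }
  pose proof (b_lower _ Hk) as Hb.
  pose proof (INR_div2 n) as Hd.
  assert (Hk1 : 1 <= INR (Nat.div2 n)) by (apply (le_INR 1); exact Hk).
  assert (Hkn : INR (Nat.div2 n) <= INR n) by (destruct (Nat.even n); lra).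
  eapply Rle_trans; [|apply Rmult_le_compat_l; [lra|exact Hb]].
  rewrite <- Rinv_mult.
  apply Rinv_le_contravar.
  - assert (0 < INR (Nat.div2 n) ^ 2) by (apply pow_lt; lra). lra.
  - assert (INR (Nat.div2 n) ^ 2 <= INR n ^ 2) by (apply pow_incr; lra). lra.
Qed.

Theorem mainTheorem4 (p m : R) (hp : 0 < p) (hm : 0 < m) :
  exists C : R, forall n : nat, (2 <= n)%nat -> f_cond2 p m n <= C * b2 n.
Proof.
  set (g := fun n => INR n ^ 2 * f_arcsine p m n).
  destruct (archimed (2 * m ^ 2 / p ^ 2 + 2 * m + 2)) as [Hup _].
  set (z := up (2 * m ^ 2 / p ^ 2 + 2 * m + 2)) in *.
  assert (Hp2 : 0 < p ^ 2) by (apply pow_lt; lra).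
  assert (Hq : 0 <= 2 * m ^ 2 / p ^ 2).
  { unfold Rdiv; apply Rmult_le_pos; [nra|left; apply Rinv_0_lt_compat; lra]. }
  assert (Hz0 : (0 <= z)%Z) by (apply le_IZR; simpl; lra).
  set (N := Z.to_nat z).
  assert (HN : INR N = IZR z) by (unfold N; rewrite INR_IZR_INZ, Z2Nat.id; auto).
  assert (Hstep : forall n, (N <= n)%nat -> g (S (S n)) <= g n).
  { intros n Hn. unfold g. rewrite f_step by lra.
    assert (Hx : INR N <= INR n) by (apply le_INR; exact Hn).
    set (x := INR n) in *.
    assert (H1 : INR (S n) = x + 1) by (unfold x; rewrite S_INR; ring).
    assert (H2 : INR (S (S n)) = x + 2) by (unfold x; rewrite !S_INR; ring).
    rewrite H1, H2.
    pose proof (f_nonneg p m n hp) as Hf.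
    set (F := f_arcsine p m n) in *.
    assert (hx2 : 2 <= x) by lra.
    assert (hxm : 2 * m <= x) by lra.
    assert (hxp : 2 * m ^ 2 <= x * p ^ 2).
    { assert (2 * m ^ 2 / p ^ 2 <= x) by lra.
      apply (Rmult_le_compat_r (p ^ 2)) in H; [|lra].
      replace (2 * m ^ 2 / p ^ 2 * p ^ 2) with (2 * m ^ 2) in H by (field; lra).
      lra. }
    pose proof (poly_ineq x p m hp hm hx2 hxp hxm) as HP.
    assert (0 < m ^ 2) by (apply pow_lt; lra).
    replace ((x + 2) ^ 2 * (F * ((x ^ 2 + p ^ 2) / ((x + 1) * (x + 2))) * (m ^ 2 / (m ^ 2 + p ^ 2))))
      with (F * ((x + 2) * (x ^ 2 + p ^ 2) * m ^ 2) / ((x + 1) * (m ^ 2 + p ^ 2)))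
      by (field; lra).
    apply (Rmult_le_reg_r ((x + 1) * (m ^ 2 + p ^ 2))); [nra|].
    replace (F * ((x + 2) * (x ^ 2 + p ^ 2) * m ^ 2) / ((x + 1) * (m ^ 2 + p ^ 2)) *
      ((x + 1) * (m ^ 2 + p ^ 2))) with (F * ((x + 2) * (x ^ 2 + p ^ 2) * m ^ 2))
      by (field; nra).
    replace (x ^ 2 * F * ((x + 1) * (m ^ 2 + p ^ 2)))
      with (F * (x ^ 2 * (x + 1) * (m ^ 2 + p ^ 2))) by ring.
    apply Rmult_le_compat_l; lra. }
  pose proof (bounded_of_step g N Hstep) as Hbd.
  set (M := Mx g (S N)) in *.
  assert (HM : 0 <= M).
  { eapply Rle_trans; [|apply (Hbd 0%nat)]. unfold g; simpl; lra. }
  set (d := / (1 - f_arcsine p m 0 - f_arcsine p m 1)).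
  exists (Rabs d * (10 * M)).
  intros n Hn.
  unfold f_cond2. fold d.
  pose proof (b2_nonneg n Hn) as Hb.
  assert (Hn2 : 2 <= INR n) by (apply (le_INR 2); exact Hn).
  assert (Hpos : 0 < 10 * INR n ^ 2) by (assert (0 < INR n ^ 2) by (apply pow_lt; lra); lra).
  assert (Hb0 : 0 <= b2 n) by (eapply Rle_trans; [left; apply Rinv_0_lt_compat; exact Hpos|exact Hb]).
  pose proof (f_nonneg p m n hp) as Hf.
  assert (Hfb : f_arcsine p m n <= 10 * M * b2 n).
  { assert (Hg : g n <= M) by apply Hbd.
    unfold g in Hg.
    assert (HnM : INR n ^ 2 * f_arcsine p m n <= (10 * M * b2 n) * INR n ^ 2).
    { eapply Rle_trans; [exact Hg|].
      apply (Rmult_le_compat_l (10 * M)) in Hb; [|lra].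
      replace (10 * M * / (10 * INR n ^ 2)) with (M / INR n ^ 2) in Hb by (field; lra).
      apply (Rmult_le_compat_r (INR n ^ 2)) in Hb; [|lra].
      replace (M / INR n ^ 2 * INR n ^ 2) with M in Hb by (field; lra).
      lra. }
    assert (0 < INR n ^ 2) by (apply pow_lt; lra).
    nra. }
  unfold Rdiv. fold d.
  destruct (Rle_or_lt d 0) as [Hd|Hd].
  - assert (f_arcsine p m n * d <= 0) by nra.
    assert (0 <= Rabs d * (10 * M) * b2 n).
    { apply Rmult_le_pos; [apply Rmult_le_pos; [apply Rabs_pos|lra]|lra]. }
    lra.
  - rewrite Rabs_pos_eq by lra. nra.
Qed.
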